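(* Let $G$ be a finite graph with a fixed orientation of each edge, and let $p\colon \widehat G\to G$ be its oriented edge double with involution $\sigma\colon\widehat G\to\widehat G$. Let $E_1,E_{-1}\subseteq H_1(\widehat G;\mathbb{R})$ be the eigenspaces of $\sigma_*$ for the eigenvalues $1$ and $-1$. Then $H_1(\widehat G;\mathbb{R})=E_1\oplus E_{-1}$, the map $p_*\colon H_1(\widehat G;\mathbb{R})\to H_1(G;\mathbb{R})$ restricts to an isomorphism $E_1\to H_1(G;\mathbb{R})$, and $\ker(p_* )=E_{-1}$, which is isomorphic to the space $C_1(G;\mathbb{R})$ of simplicial $1$-chains of $G$.
   Context: The oriented edge double of $G$ is the graph $\widehat G$ together with a map $p\colon\widehat G\to G$ that is a bijection on vertices and such that for each oriented edge $e$ of $G$ there are exactly two oriented edges $e_+,e_-$ of $\widehat G$ over it, with $p(e_+)=e$ and $p(e_-)=\overline e$ (here $\overline e$ denotes $e$ with reversed orientation). The involution $\sigma\colon\widehat G\to\widehat G$ is defined by $e_+\mapsto \overline{e_-}$ and $e_-\mapsto\overline{e_+}$; it satisfies $p\circ\sigma=p$. *)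

(* Defs.v *)
From HB Require Import structures.
From mathcomp Require Import all_boot all_order all_algebra.
Set Implicit Arguments. Unset Strict Implicit. Unset Printing Implicit Defensive.
Import GRing.Theory Num.Theory.
Local Open Scope ring_scope.

Record graph := Graph {
  gV : finType;
  gE : finType;
  src : gE -> gV;
  tgt : gE -> gV }.

Definition C1 (R : fieldType) (G : graph) := {ffun gE G -> R^o}.
Definition C0 (R : fieldType) (G : graph) := {ffun gV G -> R^o}.

Definition boundary (R : fieldType) (G : graph) : 'Hom(C1 R G, C0 R G) :=
  linfun (fun c : C1 R G =>
    [ffun v => \sum_(e | tgt e == v) c e - \sum_(e | src e == v) c e] : C0 R G).

(* H_1(G;R) = ker of the boundary (a graph has no 2-cells). *)
Definition H1 (R : fieldType) (G : graph) : {vspace C1 R G} :=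
  lker (boundary R G).

(* A graph morphism sending vertices to vertices and edges to edges:
   [mor_s x = true] means the fixed orientation of x is sent to the fixed
   orientation of [mor_e x], [false] means to its reverse. *)
Record gmorph (G H : graph) := GMorph {
  mor_v : gV G -> gV H;
  mor_e : gE G -> gE H;
  mor_s : gE G -> bool;
  mor_compat : forall x,
    if mor_s x then mor_v (src x) = src (mor_e x) /\ mor_v (tgt x) = tgt (mor_e x)
    else mor_v (src x) = tgt (mor_e x) /\ mor_v (tgt x) = src (mor_e x) }.

Definition chain_map (R : fieldType) (G H : graph) (f : gmorph G H)
  : 'Hom(C1 R G, C1 R H) :=
  linfun (fun c : C1 R G =>
    [ffun y => \sum_(x | mor_e f x == y)
                 (if mor_s f x then c x else - c x)] : C1 R H).

(* The oriented edge double: same vertices; over each edge e of G two edges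
   (e,true) = e_+ oriented src e -> tgt e, and (e,false) = e_- oriented
   tgt e -> src e (so p(e_+) = e and p(e_-) = reverse of e). *)
Definition edge_double (G : graph) : graph :=
  @Graph (gV G) (gE G * bool)%type
    (fun x => if x.2 then src x.1 else tgt x.1)
    (fun x => if x.2 then tgt x.1 else src x.1).

Lemma edge_double_p_compat (G : graph) (x : gE (edge_double G)) :
  if x.2 then (src x : gV (edge_double G)) = src x.1 /\
               (tgt x : gV (edge_double G)) = tgt x.1
  else (src x : gV (edge_double G)) = tgt x.1 /\
       (tgt x : gV (edge_double G)) = src x.1.
Proof. by case: x => e []. Qed.

Definition edge_double_p (G : graph) : gmorph (edge_double G) G :=
  @GMorph (edge_double G) G id (fun x => x.1) (fun x => x.2)
    (@edge_double_p_compat G).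

Lemma edge_double_sigma_compat (G : graph) (x : gE (edge_double G)) :
  (src x : gV (edge_double G)) = tgt ((x.1, ~~ x.2) : gE (edge_double G)) /\
  (tgt x : gV (edge_double G)) = src ((x.1, ~~ x.2) : gE (edge_double G)).
Proof. by case: x => e []. Qed.

Definition edge_double_sigma (G : graph) : gmorph (edge_double G) (edge_double G) :=
  @GMorph (edge_double G) (edge_double G) id (fun x => (x.1, ~~ x.2))
    (fun _ => false) (@edge_double_sigma_compat G).

(* Main.v *)
Require Import Defs.
From HB Require Import structures.
From mathcomp Require Import all_boot all_order all_algebra.
From mathcomp Require Import ring lra.
Set Implicit Arguments. Unset Strict Implicit. Unset Printing Implicit Defensive.
Import GRing.Theory Num.Theory.
Local Open Scope ring_scope.

Lemma ffD (I : finType) (M : zmodType) (u v : {ffun I -> M}) x : (u + v) x = u x + v x.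
Proof. by rewrite ffunE. Qed.
Lemma ffN (I : finType) (M : zmodType) (u : {ffun I -> M}) x : (- u) x = - u x.
Proof. by rewrite ffunE. Qed.
Lemma ff0 (I : finType) (M : zmodType) x : (0 : {ffun I -> M}) x = 0.
Proof. by rewrite ffunE. Qed.
Lemma ffZ (I : finType) (K : pzRingType) (M : lmodType K) k (u : {ffun I -> M}) x : (k *: u) x = k *: u x.
Proof. by rewrite ffunE. Qed.

Lemma sum_pair (T : finType) (M : zmodType) (F : T * bool -> M) :
  \sum_x F x = \sum_e (F (e,true) + F (e,false)).
Proof.
rewrite (eq_bigr (fun p => F (p.1,p.2))) => [|[]//].
rewrite -(pair_bigA _ (fun e b => F (e,b))); apply: eq_bigr => e _; by rewrite big_bool.
Qed.

Section H.
Variables (R : realFieldType).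
Lemma hZ (U V : vectType R) (f : 'Hom(U, V)) k u : f (k *: u) = k *: f u.
Proof. exact: linearZ. Qed.
Lemma hD (U V : vectType R) (f : 'Hom(U, V)) u v : f (u + v) = f u + f v.
Proof. exact: linearD. Qed.
Lemma hB (U V : vectType R) (f : 'Hom(U, V)) u v : f (u - v) = f u - f v.
Proof. exact: linearB. Qed.
Lemma hN (U V : vectType R) (f : 'Hom(U, V)) u : f (- u) = - f u.
Proof. exact: linearN. Qed.
Lemma h0 (U V : vectType R) (f : 'Hom(U, V)) : f 0 = 0.
Proof. exact: linear0. Qed.
Lemma cD H (u v : C1 R H) x : (u + v) x = u x + v x.
Proof. by rewrite ffunE. Qed.
Lemma cZ H k (u : C1 R H) x : (k *: u) x = k *: u x.
Proof. by rewrite ffunE. Qed.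
Lemma cN H (u : C1 R H) x : (- u) x = - u x.
Proof. by rewrite ffunE. Qed.
Lemma c0 H x : (0 : C1 R H) x = 0.
Proof. by rewrite ffunE. Qed.

Definition bfun (H : graph) (c : C1 R H) : C0 R H :=
  [ffun v => \sum_(e | tgt e == v) c e - \sum_(e | src e == v) c e].
Fact bfun_lin H : linear (@bfun H).
Proof.
move=> a u v; apply/ffunP => x; rewrite !ffunE /=.
have E i : (a *: u + v) i = a *: u i + v i by rewrite cD cZ.
rewrite !(eq_bigr _ (fun i _ => E i)).
by rewrite !big_split /= -!scaler_sumr scalerBr addrACA opprD.
Qed.
HB.instance Definition _ (H : graph) := GRing.isLinear.Build R (C1 R H) (C0 R H) _ (@bfun H) (@bfun_lin H).
Lemma boundaryE H c v : boundary R H c v = \sum_(e | tgt e == v) c e - \sum_(e | src e == v) c e.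
Proof. by rewrite /boundary (lfunE (@bfun H)) ffunE. Qed.

Definition cfun (H K : graph) (f : gmorph H K) (c : C1 R H) : C1 R K :=
    [ffun y => \sum_(x | mor_e f x == y)
                 (if mor_s f x then c x else - c x)].
Fact cfun_lin H K f : linear (@cfun H K f).
Proof.
move=> a u v; apply/ffunP => x; rewrite !ffunE /=.
have E i : (a *: u + v) i = a *: u i + v i by rewrite cD cZ.
rewrite scaler_sumr -big_split /=; apply: eq_bigr => i _.
by case: (mor_s f i); rewrite E // scalerN opprD.
Qed.
HB.instance Definition _ (H K : graph) (f : gmorph H K) := GRing.isLinear.Build R (C1 R H) (C1 R K) _ (@cfun H K f) (@cfun_lin H K f).
Lemma chainE (H K : graph) (f : gmorph H K) (c : C1 R H) y : chain_map R f c y = \sum_(x | mor_e f x == y)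
                 (if mor_s f x then c x else - c x).
Proof. by rewrite /chain_map (lfunE (@cfun H K f)) ffunE. Qed.

Variable G : graph.
Notation Gh := (edge_double G).

Lemma pE (c : C1 R Gh) e : chain_map R (edge_double_p G) c e = c (e,true) - c (e,false).
Proof.
rewrite chainE big_mkcond /= sum_pair /=.
rewrite (bigD1 e) //= eqxx big1 ?addr0 // => i /negbTE -> .
by rewrite addr0.
Qed.

Lemma sE (c : C1 R Gh) e b : chain_map R (edge_double_sigma G) c (e,b) = - c (e, ~~b).
Proof.
rewrite chainE (big_pred1 (e, ~~b)) //= => -[e' b'] /=.
by rewrite !xpair_eqE; case: b; case: b'.
Qed.

Lemma bndE (c : C1 R Gh) : boundary R Gh c = boundary R G (chain_map R (edge_double_p G) c).
Proof.
apply/ffunP => v; rewrite boundaryE [RHS]boundaryE.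
rewrite !(big_mkcond (fun e => _ == v)) /=.
rewrite !sum_pair /=.
rewrite -!sumrB; apply: eq_bigr => e _; rewrite !pE.
by case: (tgt e == v); case: (src e == v); rewrite ?addr0 ?add0r ?subr0 ?sub0r ?opprD ?opprK //; ring.
Qed.

Notation p_ := (chain_map R (edge_double_p G)).
Notation s_ := (chain_map R (edge_double_sigma G)).

Lemma sK c : s_ (s_ c) = c.
Proof. by apply/ffunP => -[e b]; rewrite !sE negbK opprK. Qed.

Lemma ps c : p_ (s_ c) = p_ c.
Proof. by apply/ffunP => e; rewrite !pE !sE /= opprK addrC. Qed.

Lemma memH c : (c \in H1 R Gh) = (boundary R G (p_ c) == 0).
Proof. by rewrite memv_ker bndE. Qed.

Lemma memH_s c : c \in H1 R Gh -> s_ c \in H1 R Gh.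
Proof. by rewrite !memH ps. Qed.

Lemma memeig a c : (c \in passmx.leigenspace s_ a) = (s_ c == a *: c).
Proof.
by rewrite /passmx.leigenspace memv_ker add_lfunE opp_lfunE scale_lfunE id_lfunE subr_eq0.
Qed.

Lemma two_neq0 : (2%:R : R) != 0.
Proof. by rewrite pnatr_eq0. Qed.


Notation E1 := (H1 R Gh :&: passmx.leigenspace s_ 1)%VS.
Notation Em1 := (H1 R Gh :&: passmx.leigenspace s_ (-1))%VS.

Lemma memE1 (c : C1 R Gh) : (c \in E1) = (c \in H1 R Gh) && (s_ c == c).
Proof. by rewrite memv_cap memeig scale1r. Qed.
Lemma memEm1 (c : C1 R Gh) : (c \in Em1) = (c \in H1 R Gh) && (s_ c == - c).
Proof. by rewrite memv_cap memeig scaleN1r. Qed.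

Lemma inE1 (w : C1 R Gh) : w \in H1 R Gh -> s_ w = w -> w \in E1.
Proof. by move=> h1 h2; rewrite memE1 h1 h2 eqxx. Qed.
Lemma inEm1 (w : C1 R Gh) : w \in H1 R Gh -> s_ w = - w -> w \in Em1.
Proof. by move=> h1 h2; rewrite memEm1 h1 h2 eqxx. Qed.

Lemma part1 : (E1 + Em1)%VS = H1 R Gh /\ directv (E1 + Em1).
Proof.
split.
  apply/vspaceP => c; apply/idP/idP.
    case/memv_addP => u; rewrite memE1 => /andP[Hu _] [w]; rewrite memEm1 => /andP[Hw _] ->.
    exact: memvD.
  move=> Hc.
  have -> : c = (2%:R^-1 *: (c + s_ c)) + (2%:R^-1 *: (c - s_ c)).
    rewrite -scalerDr addrACA subrr addr0 -mulr2n -scaler_nat scalerA mulVf ?scale1r //.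
    exact: two_neq0.
  apply: memv_add.
    by apply: inE1; rewrite ?memvZ ?memvD ?memH_s // hZ hD sK addrC.
  apply: inEm1. by rewrite ?memvZ ?memvB ?memH_s. rewrite hZ hB sK. by rewrite -[in LHS]opprB scalerN.
apply/directv_addP; apply/eqP; rewrite -subv0; apply/subvP => c.
move=> /memv_capP[/memv_capP[_ e1] /memv_capP[_ e2]]; rewrite memv0.
move: e1; rewrite memeig scale1r => /eqP h1.
move: e2; rewrite memeig scaleN1r => /eqP h2.
have e : c = - c by rewrite -{1}h1 h2.
have : c + c = 0 by rewrite {2}e subrr.
by move/eqP; rewrite -mulr2n -scaler_nat scaler_eq0 (negbTE two_neq0).
Qed.

Lemma aux (x y : R) : - x = y -> x - y = 0 -> x = 0 /\ y = 0.
Proof. move=> h1 h2; split; lra. Qed.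

Lemma part2 : (p_ @: H1 R Gh <= H1 R G)%VS.
Proof.
apply/subvP => a /memv_imgP [c Hc ->].
rewrite memv_ker; move: Hc; rewrite memH.
done.
Qed.

Lemma part3 : (p_ @: E1)%VS = H1 R G /\ (E1 :&: lker p_)%VS = 0%VS.
Proof.
split.
  apply/eqP; rewrite eqEsubv; apply/andP; split.
    apply: subv_trans part2; apply: limgS; exact: capvSl.
  apply/subvP => a Ha; apply/memv_imgP.
  pose c : C1 R Gh := [ffun x : gE G * bool => if x.2 then a x.1 / 2%:R else - (a x.1 / 2%:R)].
  have pc : p_ c = a.
    by apply/ffunP => e; rewrite pE !ffunE /= opprK -splitr.
  exists c; last by rewrite pc.
  apply: inE1.
    by rewrite memH pc; move: Ha; rewrite memv_ker.
  by apply/ffunP => -[e b]; rewrite sE !ffunE; case: b => //=; rewrite opprK.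
apply/eqP; rewrite -subv0; apply/subvP => c /memv_capP[/memv_capP[_ e1] e2].
rewrite memv0; move: e1; rewrite memeig scale1r => /eqP h1.
move: e2; rewrite memv_ker => /eqP h2.
apply/eqP/ffunP => -[e b].
have := congr1 (fun f : C1 R G => f e) h2.
have := congr1 (fun f : C1 R Gh => f (e, false)) h1.
rewrite pE sE /= !c0 => ht hp.
have [hx hy] := aux ht hp.
by case: b; rewrite /= ?hx ?hy; symmetry; exact: (@c0 (edge_double G) _).
Qed.

Lemma part4 : (H1 R Gh :&: lker p_)%VS = Em1.
Proof.
apply/vspaceP => c; apply/idP/idP.
  move=> /memv_capP[Hc e2]; apply: inEm1 => //.
  move: e2; rewrite memv_ker => /eqP h2.
  apply/ffunP => -[e b]; rewrite sE cN.
  have := congr1 (fun f : C1 R G => f e) h2; rewrite pE c0 => /eqP; rewrite subr_eq0 => /eqP h.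
  by case: b => /=; rewrite h.
move=> /memv_capP[Hc e1]; apply/memv_capP; split => //.
move: e1; rewrite memeig scaleN1r => /eqP h1.
rewrite memv_ker; apply/eqP/ffunP => e; rewrite pE c0.
have := congr1 (fun f : C1 R Gh => f (e, true)) h1; rewrite sE cN /= => /oppr_inj ->.
by rewrite subrr.
Qed.

Definition upf (a : C1 R G) : C1 R Gh := [ffun x : gE G * bool => a x.1].
Fact upf_lin : linear upf.
Proof.
move=> k u v; apply/ffunP => x.
by rewrite [LHS]ffunE (cD (k *: u) v) (cZ k u) (cD (k *: upf u) (upf v)) (cZ k (upf u)) !ffunE.
Qed.
HB.instance Definition _ := GRing.isLinear.Build R (C1 R G) (C1 R Gh) _ upf upf_lin.

Lemma part5 : exists f : 'Hom(C1 R G, C1 R Gh), lker f = 0%VS /\ limg f = Em1.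
Proof.
exists (linfun upf); split.
  apply/eqP; rewrite -subv0; apply/subvP => a; rewrite memv_ker memv0 lfunE => /eqP h.
  apply/eqP/ffunP => e; have := congr1 (fun f : C1 R Gh => f (e, true)) h.
  by rewrite ffunE !c0.
apply/vspaceP => c; apply/idP/idP.
  move=> /memv_imgP[a _ ->]; rewrite lfunE; apply: inEm1.
    rewrite memH (_ : p_ (upf a) = 0) ?h0 //.
    by apply/ffunP => e; rewrite pE !ffunE subrr.
  by apply/ffunP => -[e b]; rewrite sE cN !ffunE.
move=> /memv_capP[_]; rewrite memeig scaleN1r => /eqP h.
apply/memv_imgP; exists [ffun e => c (e, true)]; first exact: memvf.
rewrite lfunE; apply/ffunP => -[e b]; rewrite !ffunE /=; case: b => //.
by have := congr1 (fun f : C1 R Gh => f (e, true)) h; rewrite sE cN /= => /oppr_inj.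
Qed.

End H.

Theorem lemma2p3 (R : realFieldType) (G : graph) :
  let Gh := edge_double G in
  let p_ := chain_map R (edge_double_p G) in
  let s_ := chain_map R (edge_double_sigma G) in
  let E1 := (H1 R Gh :&: passmx.leigenspace s_ 1)%VS in
  let Em1 := (H1 R Gh :&: passmx.leigenspace s_ (-1))%VS in
  [/\ (E1 + Em1)%VS = H1 R Gh /\ directv (E1 + Em1),
      (p_ @: H1 R Gh <= H1 R G)%VS,
      (p_ @: E1)%VS = H1 R G /\ (E1 :&: lker p_)%VS = 0%VS,
      (H1 R Gh :&: lker p_)%VS = Em1
    & exists f : 'Hom(C1 R G, C1 R Gh), lker f = 0%VS /\ limg f = Em1].
Proof.
move=> Gh p_ s_ E1 Em1.
split; [exact: part1 | exact: part2 | exact: part3 | exact: part4 | exact: part5].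
Qed.
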